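(* Let $\langle X,d\rangle$ be a metric space with completion $\langle\widehat{X},\widehat{d}\rangle$. The following are equivalent: (1) $\widehat{X}$ is cofinally Bourbaki quasi-complete; (2) $\widehat{X}$ is cofinally complete and every CC-regular function from $X$ to any metric space $\langle Y,\rho\rangle$ maps cofinally Bourbaki quasi-Cauchy sequences to cofinally Cauchy sequences; (3) $\widehat{X}$ is cofinally complete and every real-valued CC-regular function on $X$ maps cofinally Bourbaki quasi-Cauchy sequences to cofinally Cauchy sequences; (4) $\widehat{X}$ is cofinally complete and every cofinally Bourbaki quasi-Cauchy sequence in $X$ is cofinally Cauchy.
   Context: For $\varepsilon>0$, an $\varepsilon$-chain joining $x,y$ is a finite sequence $x=x_0,\dots,x_n=y$ with consecutive distances $<\varepsilon$. A sequence $\langle x_n\rangle$ in a metric space is cofinally Bourbaki quasi-Cauchy if for every $\varepsilon>0$ there is an infinite $N_\varepsilon\subseteq\mathbb{N}$ such that any $x_j,x_k$ with $j,k\in N_\varepsilon$ can be joined by an $\varepsilon$-chain in that space; a space is cofinally Bourbaki quasi-complete if every such sequence has a cluster point. A sequence $\langle y_n\rangle$ in $\langle Y,\rho\rangle$ is cofinally Cauchy if for every $\varepsilon>0$ there is an infinite $N_\varepsilon\subseteq\mathbb{N}$ with $\rho(y_n,y_m)<\varepsilon$ for all $n,m\in N_\varepsilon$; a space is cofinally complete if every cofinally Cauchy sequence has a cluster point. A function is CC-regular if it maps cofinally Cauchy sequences to cofinally Cauchy sequences. *)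

(* Defs.v *)
From Stdlib Require Import Reals Lra.
Open Scope R_scope.

Definition is_metric {T : Type} (d : T -> T -> R) : Prop :=
  (forall x y, 0 <= d x y) /\
  (forall x y, d x y = 0 <-> x = y) /\
  (forall x y, d x y = d y x) /\
  (forall x y z, d x z <= d x y + d y z).

Definition infinite_nat (N : nat -> Prop) : Prop :=
  forall m : nat, exists n : nat, (m <= n)%nat /\ N n.

Definition eps_chain {T : Type} (d : T -> T -> R) (eps : R) (x y : T) : Prop :=
  exists (n : nat) (c : nat -> T),
    c 0%nat = x /\ c n = y /\ (forall i, (i < n)%nat -> d (c i) (c (S i)) < eps).

Definition cofinally_BQC {T : Type} (d : T -> T -> R) (x : nat -> T) : Prop :=
  forall eps, 0 < eps ->
    exists N : nat -> Prop, infinite_nat N /\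
      forall j k, N j -> N k -> eps_chain d eps (x j) (x k).

Definition cofinally_cauchy {T : Type} (d : T -> T -> R) (x : nat -> T) : Prop :=
  forall eps, 0 < eps ->
    exists N : nat -> Prop, infinite_nat N /\
      forall n m, N n -> N m -> d (x n) (x m) < eps.

Definition cluster_point {T : Type} (d : T -> T -> R) (x : nat -> T) (p : T) : Prop :=
  forall eps, 0 < eps -> forall m : nat, exists n, (m <= n)%nat /\ d (x n) p < eps.

Definition cofinally_BQ_complete {T : Type} (d : T -> T -> R) : Prop :=
  forall x : nat -> T, cofinally_BQC d x -> exists p, cluster_point d x p.

Definition cofinally_complete {T : Type} (d : T -> T -> R) : Prop :=
  forall x : nat -> T, cofinally_cauchy d x -> exists p, cluster_point d x p.

Definition CC_regular {X Y : Type} (dX : X -> X -> R) (dY : Y -> Y -> R)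
  (f : X -> Y) : Prop :=
  forall x : nat -> X, cofinally_cauchy dX x -> cofinally_cauchy dY (fun n => f (x n)).

Definition cauchy_seq {T : Type} (d : T -> T -> R) (x : nat -> T) : Prop :=
  forall eps, 0 < eps -> exists N : nat, forall n m, (N <= n)%nat -> (N <= m)%nat ->
    d (x n) (x m) < eps.

Definition converges_to {T : Type} (d : T -> T -> R) (x : nat -> T) (p : T) : Prop :=
  forall eps, 0 < eps -> exists N : nat, forall n, (N <= n)%nat -> d (x n) p < eps.

Definition complete_metric {T : Type} (d : T -> T -> R) : Prop :=
  forall x, cauchy_seq d x -> exists p, converges_to d x p.

Definition is_completion {X Xh : Type} (dX : X -> X -> R) (dXh : Xh -> Xh -> R)
  (i : X -> Xh) : Prop :=
  is_metric dXh /\ complete_metric dXh /\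
  (forall a b, dXh (i a) (i b) = dX a b) /\
  (forall p eps, 0 < eps -> exists a, dXh (i a) p < eps).

Definition dist_R (a b : R) : R := Rabs (a - b).

(* Main.v *)
Require Import Defs.
From Stdlib Require Import Reals Lra Lia Classical ClassicalEpsilon.
Open Scope R_scope.

Lemma m_nonneg {T} (d : T -> T -> R) : is_metric d -> forall x y, 0 <= d x y.
Proof. intros [H _]; exact H. Qed.
Lemma m_refl {T} (d : T -> T -> R) : is_metric d -> forall x, d x x = 0.
Proof. intros [_ [H _]] x. apply H. reflexivity. Qed.
Lemma m_sym {T} (d : T -> T -> R) : is_metric d -> forall x y, d x y = d y x.
Proof. intros [_ [_ [H _]]]; exact H. Qed.
Lemma m_tri {T} (d : T -> T -> R) : is_metric d -> forall x y z, d x z <= d x y + d y z.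
Proof. intros [_ [_ [_ H]]]; exact H. Qed.

Lemma arch_inv (e : R) : 0 < e -> exists K : nat, forall n, (K <= n)%nat -> / INR (S n) < e.
Proof.
  intros He. destruct (archimed_cor1 e He) as [N [HN HN0]].
  exists N. intros n Hn.
  apply Rle_lt_trans with (/ INR N); [|exact HN].
  apply Rinv_le_contravar. apply lt_0_INR; exact HN0. apply le_INR; lia.
Qed.

Lemma cc_bqc {T} (d : T -> T -> R) (x : nat -> T) : cofinally_cauchy d x -> cofinally_BQC d x.
Proof.
  intros H eps He. destruct (H eps He) as [N [HN HNd]].
  exists N. split; [exact HN|]. intros j k Hj Hk.
  exists 1%nat, (fun t => match t with O => x j | _ => x k end).
  split; [reflexivity|]. split; [reflexivity|].
  intros t Ht. destruct t; [| lia]. simpl. apply HNd; assumption.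
Qed.

Lemma cluster_cc {T} (d : T -> T -> R) (y : nat -> T) (p : T) :
  is_metric d -> cluster_point d y p -> cofinally_cauchy d y.
Proof.
  intros Hm Hc eps He. exists (fun n => d (y n) p < eps/2). split.
  - intros m. apply Hc. lra.
  - intros n m Hn Hm'. pose proof (m_tri d Hm (y n) p (y m)) as H.
    rewrite (m_sym d Hm p (y m)) in H. lra.
Qed.

Lemma chain_map {X Xh} (d : X -> X -> R) (dh : Xh -> Xh -> R) (i : X -> Xh) :
  (forall a b, dh (i a) (i b) = d a b) -> forall e a b, eps_chain d e a b -> eps_chain dh e (i a) (i b).
Proof.
  intros Hi e a b [n [c [H0 [Hn Hs]]]]. exists n, (fun t => i (c t)).
  split; [rewrite H0; reflexivity|]. split; [rewrite Hn; reflexivity|].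
  intros t Ht. rewrite Hi. apply Hs; exact Ht.
Qed.

Lemma bqc_map {X Xh} (d : X -> X -> R) (dh : Xh -> Xh -> R) (i : X -> Xh) :
  (forall a b, dh (i a) (i b) = d a b) -> forall x, cofinally_BQC d x -> cofinally_BQC dh (fun n => i (x n)).
Proof.
  intros Hi x H eps He. destruct (H eps He) as [N [HN Hc]]. exists N; split; auto.
  intros j k Hj Hk. apply (chain_map d dh i Hi). apply Hc; auto.
Qed.

Lemma cc_iso {X Xh} (d : X -> X -> R) (dh : Xh -> Xh -> R) (i : X -> Xh) :
  (forall a b, dh (i a) (i b) = d a b) -> forall x, cofinally_cauchy dh (fun n => i (x n)) -> cofinally_cauchy d x.
Proof.
  intros Hi x H eps He. destruct (H eps He) as [N [HN Hd]]. exists N; split; auto.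
  intros n m Hn Hm. rewrite <- Hi. apply Hd; auto.
Qed.

Lemma cc_iso' {X Xh} (d : X -> X -> R) (dh : Xh -> Xh -> R) (i : X -> Xh) :
  (forall a b, dh (i a) (i b) = d a b) -> forall x, cofinally_cauchy d x -> cofinally_cauchy dh (fun n => i (x n)).
Proof.
  intros Hi x H eps He. destruct (H eps He) as [N [HN Hd]]. exists N; split; auto.
  intros n m Hn Hm. rewrite Hi. apply Hd; auto.
Qed.

Lemma bqc_cc {X Xh} (d : X -> X -> R) (dh : Xh -> Xh -> R) (i : X -> Xh) :
  is_completion d dh i -> cofinally_BQ_complete dh -> forall x, cofinally_BQC d x -> cofinally_cauchy d x.
Proof.
  intros [Hm [_ [Hi _]]] H1 x Hx.
  destruct (H1 _ (bqc_map d dh i Hi x Hx)) as [p Hp].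
  apply (cc_iso d dh i Hi). exact (cluster_cc dh _ p Hm Hp).
Qed.

Lemma dist_R_metric : is_metric dist_R.
Proof.
  unfold is_metric, dist_R. split; [intros; apply Rabs_pos|].
  split; [intros x y; split; intros H|].
  - destruct (Req_dec (x - y) 0). lra. apply Rabs_no_R0 in H0. contradiction.
  - subst. replace (y - y) with 0 by ring. apply Rabs_R0.
  - split. intros; apply Rabs_minus_sym.
    intros. replace (x - z) with ((x-y)+(y-z)) by ring. apply Rabs_triang.
Qed.

Lemma chain_approx {X Xh} (d : X -> X -> R) (dh : Xh -> Xh -> R) (i : X -> Xh) :
  is_completion d dh i -> forall e p q a b, 0 < e -> eps_chain dh e p q ->
  dh (i a) p < e -> dh (i b) q < e -> eps_chain d (3*e) a b.
Proof.
  intros [Hm [_ [Hi Hden]]] e p q a b He [n [c [H0 [Hn Hs]]]] Ha Hb.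
  assert (G : forall r, {a' | dh (i a') r < e}).
  { intro r; apply constructive_indefinite_description; apply Hden; exact He. }
  set (c' := fun t => if Nat.eqb t 0 then a else if Nat.leb t n then proj1_sig (G (c t)) else b).
  assert (Happ : forall t, (t <= n)%nat -> dh (i (c' t)) (c t) < e).
  { intros t Ht. unfold c'. destruct (Nat.eqb_spec t 0). subst t. rewrite H0; exact Ha.
    destruct (Nat.leb_spec t n); [|lia]. exact (proj2_sig (G (c t))). }
  assert (Hend : c' (S n) = b).
  { unfold c'. destruct (Nat.eqb_spec (S n) 0); [lia|].
    destruct (Nat.leb_spec (S n) n); [lia|]. reflexivity. }
  exists (S n), c'. split. unfold c'; reflexivity.
  split. exact Hend.
  intros t Ht. rewrite <- Hi.
  destruct (Nat.eq_dec t n) as [->|Htn].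
  - rewrite Hend. pose proof (Happ n (le_n n)) as H1. rewrite Hn in H1.
    pose proof (m_tri dh Hm (i (c' n)) q (i b)) as H2.
    rewrite (m_sym dh Hm q (i b)) in H2. lra.
  - pose proof (Happ t ltac:(lia)) as H1. pose proof (Happ (S t) ltac:(lia)) as H2.
    pose proof (Hs t ltac:(lia)) as H3.
    pose proof (m_tri dh Hm (i (c' t)) (c t) (i (c' (S t)))) as T1.
    pose proof (m_tri dh Hm (c t) (c (S t)) (i (c' (S t)))) as T2.
    rewrite (m_sym dh Hm (c (S t))) in T2. lra.
Qed.

Definition bump {T} (dh : T -> T -> R) (y : nat -> T) (n : nat) (q : T) : R :=
  INR n * Rmax 0 (1 - INR (S n) * dh q (y n)).
Fixpoint maxb {T} (dh : T -> T -> R) (y : nat -> T) (k : nat) (q : T) : R :=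
  match k with O => bump dh y 0 q | S k' => Rmax (maxb dh y k' q) (bump dh y (S k') q) end.

Lemma bump_nonneg {T} dh (y : nat -> T) n q : 0 <= bump dh y n q.
Proof. unfold bump. apply Rmult_le_pos. apply pos_INR. apply Rmax_l. Qed.

Lemma bump_zero {T} dh (y : nat -> T) n q : / INR (S n) <= dh q (y n) -> bump dh y n q = 0.
Proof.
  intros H. unfold bump. rewrite Rmax_left. ring.
  assert (HS : 0 < INR (S n)) by (apply lt_0_INR; lia).
  assert (1 <= INR (S n) * dh q (y n)).
  { apply Rmult_le_compat_l with (r := INR (S n)) in H; [|lra].
    rewrite Rinv_r in H; lra. }
  lra.
Qed.

Lemma bump_self {T} dh (y : nat -> T) n : is_metric dh -> bump dh y n (y n) = INR n.
Proof. intros Hm. unfold bump. rewrite (m_refl dh Hm). rewrite Rmax_right; [ring|lra]. Qed.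

Lemma rmax_lip a b a' b' c : Rabs (a - a') <= c -> Rabs (b - b') <= c -> Rabs (Rmax a b - Rmax a' b') <= c.
Proof.
  intros H1 H2. unfold Rmax. destruct (Rle_dec a b); destruct (Rle_dec a' b');
  revert H1 H2; split_Rabs; lra.
Qed.

Lemma bump_lip {T} dh (y : nat -> T) n q q' : is_metric dh ->
  Rabs (bump dh y n q - bump dh y n q') <= INR n * INR (S n) * dh q q'.
Proof.
  intros Hm. unfold bump.
  pose proof (m_tri dh Hm q q' (y n)) as T1.
  pose proof (m_tri dh Hm q' q (y n)) as T2.
  rewrite (m_sym dh Hm q' q) in T2.
  assert (HS : 0 <= INR (S n)) by apply pos_INR.
  assert (Hn : 0 <= INR n) by apply pos_INR.
  assert (HA : Rabs (Rmax 0 (1 - INR (S n) * dh q (y n)) - Rmax 0 (1 - INR (S n) * dh q' (y n)))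
     <= INR (S n) * dh q q').
  { apply rmax_lip. replace (0-0) with 0 by ring; rewrite Rabs_R0; apply Rmult_le_pos; [lra| apply (m_nonneg dh Hm)].
    replace (1 - INR (S n) * dh q (y n) - (1 - INR (S n) * dh q' (y n))) with
      (INR (S n) * (dh q' (y n) - dh q (y n))) by ring.
    rewrite Rabs_mult, (Rabs_right (INR (S n))) by lra.
    apply Rmult_le_compat_l; [lra|]. split_Rabs; lra. }
  replace (INR n * Rmax 0 (1 - INR (S n) * dh q (y n)) - INR n * Rmax 0 (1 - INR (S n) * dh q' (y n)))
    with (INR n * (Rmax 0 (1 - INR (S n) * dh q (y n)) - Rmax 0 (1 - INR (S n) * dh q' (y n)))) by ring.
  rewrite Rabs_mult, (Rabs_right (INR n)) by lra.
  rewrite Rmult_assoc. apply Rmult_le_compat_l; lra.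
Qed.

Lemma maxb_nonneg {T} dh (y : nat -> T) k q : 0 <= maxb dh y k q.
Proof. induction k; simpl. apply bump_nonneg. eapply Rle_trans; [exact IHk| apply Rmax_l]. Qed.

Lemma maxb_ge {T} dh (y : nat -> T) k n q : (n <= k)%nat -> bump dh y n q <= maxb dh y k q.
Proof.
  induction k; intros H; simpl.
  - replace n with 0%nat by lia. lra.
  - destruct (Nat.eq_dec n (S k)) as [->|Hne]. apply Rmax_r.
    eapply Rle_trans; [apply IHk; lia| apply Rmax_l].
Qed.

Lemma maxb_stable {T} dh (y : nat -> T) k q : (forall n, (k < n)%nat -> bump dh y n q = 0) ->
  forall j, maxb dh y (j + k) q = maxb dh y k q.
Proof.
  intros H j. induction j; simpl. reflexivity.
  rewrite IHj, H by lia. apply Rmax_left. apply maxb_nonneg.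
Qed.

Lemma maxb_lip {T} dh (y : nat -> T) k q q' : is_metric dh ->
  Rabs (maxb dh y k q - maxb dh y k q') <= INR k * INR (S k) * dh q q'.
Proof.
  intros Hm. induction k; simpl maxb.
  - apply bump_lip; exact Hm.
  - apply rmax_lip.
    + eapply Rle_trans; [exact IHk|].
      pose proof (m_nonneg dh Hm q q'). pose proof (pos_INR k).
      rewrite !S_INR. nra.
    + apply bump_lip; exact Hm.
Qed.

Lemma H41 {X Xh} (d : X -> X -> R) (dh : Xh -> Xh -> R) (i : X -> Xh) :
  is_completion d dh i ->
  (cofinally_complete dh /\ (forall x : nat -> X, cofinally_BQC d x -> cofinally_cauchy d x)) ->
  cofinally_BQ_complete dh.
Proof.
  intros Hc [Hcc H4] y Hy.
  pose proof Hc as [Hm [_ [Hi Hden]]].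
  assert (Hx : forall n, {a | dh (i a) (y n) < / INR (S n)}).
  { intro n. apply constructive_indefinite_description. apply Hden.
    apply Rinv_0_lt_compat, lt_0_INR; lia. }
  set (x := fun n => proj1_sig (Hx n)).
  assert (Hxy : forall n, dh (i (x n)) (y n) < / INR (S n)) by (intro n; exact (proj2_sig (Hx n))).
  assert (HxB : cofinally_BQC d x).
  { intros eps He. destruct (Hy (eps/3)) as [N [HN HNc]]; [lra|].
    destruct (arch_inv (eps/3)) as [K HK]; [lra|].
    exists (fun n => N n /\ (K <= n)%nat). split.
    - intros m. destruct (HN (Nat.max m K)) as [n [Hn HNn]]. exists n. split; [lia|]. split; [exact HNn|lia].
    - intros j k [Hj Hjk] [Hk Hkk]. replace eps with (3*(eps/3)) by field.
      apply (chain_approx d dh i Hc (eps/3) (y j) (y k)); [lra | apply HNc; assumption | | ].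
      + specialize (Hxy j); specialize (HK j Hjk); lra.
      + specialize (Hxy k); specialize (HK k Hkk); lra. }
  destruct (Hcc _ (cc_iso' d dh i Hi x (H4 x HxB))) as [p Hp].
  exists p. intros eps He m.
  destruct (arch_inv (eps/2)) as [K HK]; [lra|].
  destruct (Hp (eps/2) ltac:(lra) (Nat.max m K)) as [n [Hn Hnp]].
  exists n. split; [lia|].
  pose proof (m_tri dh Hm (y n) (i (x n)) p) as T. rewrite (m_sym dh Hm (y n) (i (x n))) in T.
  cbn beta in Hnp. specialize (Hxy n). specialize (HK n ltac:(lia)). lra.
Qed.

Lemma H34 {X Xh} (d : X -> X -> R) (dh : Xh -> Xh -> R) (i : X -> Xh) :
  is_completion d dh i ->
  (cofinally_complete dh /\
    (forall f : X -> R, CC_regular d dist_R f ->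
       forall x : nat -> X, cofinally_BQC d x -> cofinally_cauchy dist_R (fun n => f (x n)))) ->
  (cofinally_complete dh /\ (forall x : nat -> X, cofinally_BQC d x -> cofinally_cauchy d x)).
Proof.
  intros Hc [Hcc H3]. split; [exact Hcc|]. intros x Hx.
  pose proof Hc as [Hm [_ [Hi Hden]]].
  destruct (classic (exists p, cluster_point dh (fun n => i (x n)) p)) as [[p Hp]|Hnc].
  { apply (cc_iso d dh i Hi). exact (cluster_cc dh _ p Hm Hp). }
  exfalso.
  set (y := fun n => i (x n)) in *.
  assert (Hloc : forall p, exists delta K, 0 < delta /\
     forall n q, (K <= n)%nat -> dh q p < delta -> / INR (S n) <= dh q (y n)).
  { intro p. assert (H : ~ cluster_point dh y p) by (intro; apply Hnc; exists p; assumption).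
    unfold cluster_point in H. apply not_all_ex_not in H as [eps H].
    apply imply_to_and in H as [He H].
    apply not_all_ex_not in H as [m H].
    destruct (arch_inv (eps/2)) as [K HK]; [lra|].
    exists (eps/2), (Nat.max m K). split; [lra|]. intros n q Hn Hq.
    assert (Hge : eps <= dh (y n) p).
    { apply Rnot_lt_le. intro Hlt. apply H. exists n. split; [lia|exact Hlt]. }
    pose proof (m_tri dh Hm (y n) q p) as T. rewrite (m_sym dh Hm (y n) q) in T.
    specialize (HK n ltac:(lia)). lra. }
  assert (HM : forall q, exists M, forall n, (M < n)%nat -> bump dh y n q = 0).
  { intro q. destruct (Hloc q) as [delta [K [Hd HK]]]. exists K. intros n Hn.
    apply bump_zero. apply HK. lia. rewrite (m_refl dh Hm). exact Hd. }
  set (Mf := fun q => proj1_sig (constructive_indefinite_description _ (HM q))).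
  assert (HMf : forall q n, (Mf q < n)%nat -> bump dh y n q = 0)
    by (intro q; exact (proj2_sig (constructive_indefinite_description _ (HM q)))).
  set (F := fun q => maxb dh y (Mf q) q).
  assert (HF : forall q k, (Mf q <= k)%nat -> F q = maxb dh y k q).
  { intros q k Hk. unfold F. replace k with ((k - Mf q) + Mf q)%nat by lia. symmetry.
    apply maxb_stable. exact (HMf q). }
  assert (HFloc : forall p, exists delta K, 0 < delta /\ forall q, dh q p < delta -> F q = maxb dh y K q).
  { intro p. destruct (Hloc p) as [delta [K [Hd HK]]]. exists delta, K. split; [exact Hd|]. intros q Hq.
    rewrite (HF q (Nat.max (Mf q) K)) by lia.
    replace (Nat.max (Mf q) K) with ((Nat.max (Mf q) K - K) + K)%nat by lia.
    apply maxb_stable. intros n Hn. apply bump_zero. apply HK; [lia|exact Hq]. }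
  assert (Hreg : CC_regular d dist_R (fun a => F (i a))).
  { intros z Hz.
    destruct (Hcc _ (cc_iso' d dh i Hi z Hz)) as [p Hp].
    intros eta Heta. destruct (HFloc p) as [delta [K [Hd HK]]].
    set (L := INR K * INR (S K) + 1).
    assert (HL : 0 < L) by (pose proof (pos_INR K); pose proof (pos_INR (S K)); unfold L; nra).
    set (r := Rmin delta (eta / (2 * L))).
    assert (Hr : 0 < r) by (apply Rmin_pos; [lra| apply Rdiv_lt_0_compat; lra]).
    exists (fun n => dh (i (z n)) p < r). split.
    - intro m. apply Hp. exact Hr.
    - intros n m Hn Hm'. unfold dist_R.
      assert (Hrd : r <= delta) by apply Rmin_l. assert (Hre : r <= eta/(2*L)) by apply Rmin_r.
      rewrite (HK (i (z n))) by lra. rewrite (HK (i (z m))) by lra.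
      pose proof (maxb_lip dh y K (i (z n)) (i (z m)) Hm) as Hlip.
      pose proof (m_tri dh Hm (i (z n)) p (i (z m))) as T. rewrite (m_sym dh Hm p (i (z m))) in T.
      pose proof (m_nonneg dh Hm (i (z n)) (i (z m))) as Hnn.
      set (D := dh (i (z n)) (i (z m))) in *.
      assert (HD : D < 2 * r) by lra.
      assert (H1 : INR K * INR (S K) * D <= L * D) by (unfold L; nra).
      assert (H2 : L * D < eta).
      { apply Rlt_le_trans with (L * (2*r)). apply Rmult_lt_compat_l; lra.
        apply Rle_trans with (L * (2 * (eta/(2*L)))). apply Rmult_le_compat_l; lra.
        right; field; lra. }
      lra. }
  destruct (H3 _ Hreg x Hx 1 Rlt_0_1) as [N [HN HNd]].
  destruct (HN 0%nat) as [n0 [_ Hn0]].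
  destruct (INR_unbounded (F (y n0) + 1)) as [m0 Hm0].
  destruct (HN m0) as [m [Hmm HNm]].
  specialize (HNd m n0 HNm Hn0). unfold dist_R in HNd. cbn beta in HNd.
  change (i (x m)) with (y m) in HNd. change (i (x n0)) with (y n0) in HNd.
  apply Rabs_def2 in HNd.
  assert (HFm : INR m <= F (y m)).
  { rewrite (HF (y m) (Nat.max (Mf (y m)) m)) by lia.
    rewrite <- (bump_self dh y m Hm). apply maxb_ge. lia. }
  pose proof (le_INR _ _ Hmm). lra.
Qed.

Theorem mainTheorem12 (X : Type) (d : X -> X -> R) (Xh : Type) (dh : Xh -> Xh -> R)
  (i : X -> Xh) (Hd : is_metric d) (Hc : is_completion d dh i) :
  let c1 := cofinally_BQ_complete dh in
  let c2 := cofinally_complete dh /\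
    (forall (Y : Type) (rho : Y -> Y -> R), is_metric rho ->
       forall f : X -> Y, CC_regular d rho f ->
       forall x : nat -> X, cofinally_BQC d x -> cofinally_cauchy rho (fun n => f (x n))) in
  let c3 := cofinally_complete dh /\
    (forall f : X -> R, CC_regular d dist_R f ->
       forall x : nat -> X, cofinally_BQC d x -> cofinally_cauchy dist_R (fun n => f (x n))) in
  let c4 := cofinally_complete dh /\
    (forall x : nat -> X, cofinally_BQC d x -> cofinally_cauchy d x) in
  (c1 <-> c2) /\ (c1 <-> c3) /\ (c1 <-> c4).
Proof.
  cbv zeta.
  pose proof Hc as [Hm [_ [Hi _]]].
  assert (H1cc : cofinally_BQ_complete dh -> cofinally_complete dh).
  { intros H y Hy. apply H. apply cc_bqc; exact Hy. }
  assert (H12 : cofinally_BQ_complete dh ->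
    cofinally_complete dh /\
    (forall (Y : Type) (rho : Y -> Y -> R), is_metric rho ->
       forall f : X -> Y, CC_regular d rho f ->
       forall x : nat -> X, cofinally_BQC d x -> cofinally_cauchy rho (fun n => f (x n)))).
  { intros H. split; [exact (H1cc H)|]. intros Y rho _ f Hf x Hx.
    apply Hf. exact (bqc_cc d dh i Hc H x Hx). }
  assert (H14 : cofinally_BQ_complete dh ->
    cofinally_complete dh /\ (forall x : nat -> X, cofinally_BQC d x -> cofinally_cauchy d x)).
  { intros H. split; [exact (H1cc H)|]. exact (bqc_cc d dh i Hc H). }
  assert (H13 : cofinally_BQ_complete dh ->
    cofinally_complete dh /\
    (forall f : X -> R, CC_regular d dist_R f ->
       forall x : nat -> X, cofinally_BQC d x -> cofinally_cauchy dist_R (fun n => f (x n)))).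
  { intros H. destruct (H12 H) as [A B]. split; [exact A|]. intros f Hf. apply B; auto. apply dist_R_metric. }
  assert (H31 := fun h => H41 d dh i Hc (H34 d dh i Hc h)).
  split; [|split]; split; auto.
  - intros [A B]. apply H31. split; [exact A|]. intros f Hf. apply B; auto. apply dist_R_metric.
  - apply (H41 d dh i Hc).
Qed.
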